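(* Let $k \ge 1$ and $m \in \{4k+3, 4k+5\}$, $\theta = 2\pi/m$. For every finite point set $P$ in general position and every $u, w \in P$, the path produced by $\theta$-routing from $u$ to $w$ in the $\theta_m$-graph on $P$ has length at most $$\left(1 + \frac{2\sin(\theta/2)\cos(\theta/4)}{\cos(\theta/2) - \sin(3\theta/4)}\right)|uw|.$$
   Context: Cones: for $m \ge 2$, $\theta = 2\pi/m$; around each point $u$ draw $m$ rays with consecutive angular separation $\theta$, oriented so the vertical upward ray from $u$ bisects a cone $C_0^u$; cones numbered clockwise, same orientation at every point. General position: no two points on a line parallel to a cone boundary ray, no two on a line perpendicular to a cone bisector, no three collinear. The $\theta_m$-graph on $P$: for each $u\in P$ and each cone $C_i^u$ containing another point of $P$, add an edge from $u$ to the point of $C_i^u$ whose orthogonal projection onto the bisector of $C_i^u$ is closest to $u$; edges weighted by Euclidean length. $\theta$-routing with destination $t$: at the current vertex $x$, if $xt$ is an edge, follow it; otherwise follow the edge from $x$ in the cone of $x$ containing $t$. *)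

(* Defs.v *)
From Stdlib Require Import Reals Lra List.
Import ListNotations.
Open Scope R_scope.

Definition point := (R * R)%type.

Definition dot (a b : point) : R := fst a * fst b + snd a * snd b.
Definition cross (a b : point) : R := fst a * snd b - snd a * fst b.
Definition vsub (a b : point) : point := (fst a - fst b, snd a - snd b).

Definition edist (p q : point) : R :=
  sqrt ((fst p - fst q) ^ 2 + (snd p - snd q) ^ 2).

Definition theta (m : nat) : R := 2 * PI / INR m.

(* Unit direction of the bisector of cone C_i: cones are numbered clockwise
   starting with C_0 bisected by the upward vertical ray, so the bisector
   of C_i makes angle pi/2 - i*theta with the positive x-axis. *)
Definition bisector (m i : nat) : point :=
  (cos (PI / 2 - INR i * theta m), sin (PI / 2 - INR i * theta m)).

Definition boundary_ray (m j : nat) : point :=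
  (cos (PI / 2 + theta m / 2 - INR j * theta m),
   sin (PI / 2 + theta m / 2 - INR j * theta m)).

(* v lies in the cone C_i^u: the angle between v - u and the bisector of
   C_i is at most theta/2 (closed cone; boundaries are irrelevant under
   general position). *)
Definition in_cone (m : nat) (u : point) (i : nat) (v : point) : Prop :=
  (i < m)%nat /\ v <> u /\
  dot (vsub v u) (bisector m i) >= edist v u * cos (theta m / 2).

Definition proj (m : nat) (u : point) (i : nat) (v : point) : R :=
  dot (vsub v u) (bisector m i).

Definition general_position (m : nat) (P : list point) : Prop :=
  (forall u v, In u P -> In v P -> u <> v ->
     (forall j, (j < m)%nat -> cross (vsub v u) (boundary_ray m j) <> 0) /\
     (forall i, (i < m)%nat -> dot (vsub v u) (bisector m i) <> 0)) /\
  (forall a b c, In a P -> In b P -> In c P -> a <> b -> b <> c -> a <> c ->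
     cross (vsub b a) (vsub c a) <> 0).

Definition cone_nbr (m : nat) (P : list point) (u : point) (i : nat)
    (v : point) : Prop :=
  In v P /\ in_cone m u i v /\
  forall w, In w P -> in_cone m u i w -> proj m u i v <= proj m u i w.

Definition theta_edge (m : nat) (P : list point) (u v : point) : Prop :=
  In u P /\ exists i, cone_nbr m P u i v.

Definition theta_adj (m : nat) (P : list point) (u v : point) : Prop :=
  theta_edge m P u v \/ theta_edge m P v u.

Definition route_step (m : nat) (P : list point) (t x y : point) : Prop :=
  (theta_adj m P x t /\ y = t) \/
  (~ theta_adj m P x t /\ exists i, in_cone m x i t /\ cone_nbr m P x i y).

(* A (completed) theta-routing path from u to t: the list
   x_0 = u, x_1, ..., x_n = t, each x_{k+1} obtained from x_k by a routing
   step, and the destination is reached only at the end. *)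
Fixpoint route_from (m : nat) (P : list point) (t x : point) (l : list point)
    : Prop :=
  match l with
  | [] => x = t
  | y :: l' => x <> t /\ route_step m P t x y /\ route_from m P t y l'
  end.

Fixpoint path_length (x : point) (l : list point) : R :=
  match l with
  | [] => 0
  | y :: l' => edist x y + path_length y l'
  end.

Definition routing_bound (m : nat) : R :=
  1 + 2 * sin (theta m / 2) * cos (theta m / 4) /
      (cos (theta m / 2) - sin (3 * theta m / 4)).

(* Main.v *)
Require Import Defs.
From Stdlib Require Import Reals Lra List ZArith Lia ClassicalEpsilon Classical.
Import ListNotations.
Open Scope R_scope.


Lemma cos_le_dec x y : 0 <= x -> x <= y -> y <= PI -> cos y <= cos x.
Proof.
  intros. destruct (Rle_lt_or_eq_dec x y H0) as [h|h].
  - left; apply cos_decreasing_1; lra.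
  - subst; lra.
Qed.

Lemma sin_le_inc x y : - (PI/2) <= x -> x <= y -> y <= PI/2 -> sin x <= sin y.
Proof.
  intros. destruct (Rle_lt_or_eq_dec x y H0) as [h|h].
  - left; apply sin_increasing_1; lra.
  - subst; lra.
Qed.

Definition Bc (th : R) := cos (th/4) / (cos (th/2) - sin (3*th/4)).
Definition Ac (th : R) := (1 + Bc th * sin (th/2)) / cos (th/2).

Section Consts.
Variable th : R.
Hypothesis th_pos : 0 < th.
Hypothesis th_small : th <= 2 * PI / 7.

Lemma PI_pos' : 0 < PI. Proof. exact PI_RGT_0. Qed.

Lemma c2_pos : 0 < cos (th/2).
Proof. apply cos_gt_0; pose proof PI_RGT_0; lra. Qed.
Lemma s2_pos : 0 < sin (th/2).
Proof. apply sin_gt_0; pose proof PI_RGT_0; lra. Qed.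
Lemma c4_pos : 0 < cos (th/4).
Proof. apply cos_gt_0; pose proof PI_RGT_0; lra. Qed.
Lemma s4_pos : 0 < sin (th/4).
Proof. apply sin_gt_0; pose proof PI_RGT_0; lra. Qed.

Lemma den_pos : 0 < cos (th/2) - sin (3*th/4).
Proof.
  pose proof PI_RGT_0.
  rewrite <- sin_shift.
  assert (sin (3*th/4) < sin (PI/2 - th/2)).
  { apply sin_increasing_1; lra. }
  lra.
Qed.

Lemma B_pos : 0 < Bc th.
Proof. unfold Bc. apply Rdiv_lt_0_compat. apply c4_pos. apply den_pos. Qed.

Lemma A_eq : Ac th * cos (th/2) = 1 + Bc th * sin (th/2).
Proof. unfold Ac. field. pose proof c2_pos; lra. Qed.

Lemma A_pos : 0 < Ac th.
Proof.
  unfold Ac. apply Rdiv_lt_0_compat.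
  pose proof B_pos; pose proof s2_pos; nra. apply c2_pos.
Qed.

Lemma A_cos_ge1 : 1 <= Ac th * cos (th/2).
Proof. rewrite A_eq. pose proof B_pos; pose proof s2_pos; nra. Qed.

Lemma diff_formula A B s d :
  A * cos (s + d) + B * sin (s + d) - (A * cos (s - d) + B * sin (s - d))
  = 2 * sin d * (B * cos s - A * sin s).
Proof. rewrite cos_plus, sin_plus, cos_minus, sin_minus. ring. Qed.

Lemma h_equal : Ac th * cos (th/4) + Bc th * sin (th/4) = Bc th.
Proof.
  assert (E: sin (3*th/4) = sin (th/4) * cos (th/2) + cos (th/4) * sin (th/2)).
  { replace (3*th/4) with (th/4 + th/2) by field. apply sin_plus. }
  pose proof den_pos. pose proof c2_pos.
  unfold Ac, Bc. rewrite E in *. field. split; lra.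
Qed.

Lemma key_id : Bc th * cos (PI/4 + th/8) - Ac th * sin (PI/4 + th/8) = 0.
Proof.
  pose proof PI_RGT_0.
  pose proof (diff_formula (Ac th) (Bc th) (PI/4 + th/8) (PI/4 - th/8)) as D.
  replace (PI/4 + th/8 + (PI/4 - th/8)) with (PI/2) in D by field.
  replace (PI/4 + th/8 - (PI/4 - th/8)) with (th/4) in D by field.
  rewrite cos_PI2, sin_PI2, h_equal in D.
  assert (0 < sin (PI/4 - th/8)) by (apply sin_gt_0; lra).
  assert (2 * sin (PI / 4 - th / 8) * (Bc th * cos (PI / 4 + th / 8) - Ac th * sin (PI / 4 + th / 8)) = 0) by lra.
  apply Rmult_integral in H1. destruct H1; [lra|auto].
Qed.

Lemma BA_nonneg s : 0 <= s -> s <= PI/4 + th/8 -> 0 <= Bc th * cos s - Ac th * sin s.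
Proof.
  intros. pose proof PI_RGT_0. pose proof key_id. pose proof A_pos. pose proof B_pos.
  assert (cos (PI/4 + th/8) <= cos s) by (apply cos_le_dec; lra).
  assert (sin s <= sin (PI/4 + th/8)) by (apply sin_le_inc; lra).
  nra.
Qed.

Lemma hmono psi al : 0 <= psi -> psi <= al -> al + psi <= PI/2 + th/4 ->
  Ac th * cos psi + Bc th * sin psi <= Ac th * cos al + Bc th * sin al.
Proof.
  intros. pose proof PI_RGT_0.
  pose proof (diff_formula (Ac th) (Bc th) ((al+psi)/2) ((al-psi)/2)) as D.
  replace ((al+psi)/2 + (al-psi)/2) with al in D by field.
  replace ((al+psi)/2 - (al-psi)/2) with psi in D by field.
  assert (0 <= sin ((al-psi)/2)) by (apply sin_ge_0; lra).
  pose proof (BA_nonneg ((al+psi)/2) ltac:(lra) ltac:(lra)).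
  nra.
Qed.

End Consts.


Lemma INR_Z n : INR n = IZR (Z.of_nat n).
Proof. apply INR_IZR_INZ. Qed.

Lemma Zle_from_R (j : Z) (n : nat) : IZR j < INR n + 2 -> IZR j <= INR n + 1.
Proof.
  intros H. rewrite INR_Z in *.
  replace (IZR (Z.of_nat n) + 2) with (IZR (Z.of_nat n + 2)) in H by (rewrite plus_IZR; ring).
  replace (IZR (Z.of_nat n) + 1) with (IZR (Z.of_nat n + 1)) by (rewrite plus_IZR; ring).
  apply lt_IZR in H. apply IZR_le. lia.
Qed.

Lemma Z_split (j : Z) (n : nat) : IZR j <= INR n \/ INR n + 1 <= IZR j.
Proof.
  rewrite INR_Z. destruct (Z.le_gt_cases j (Z.of_nat n)).
  left; apply IZR_le; auto. right. rewrite <- plus_IZR. apply IZR_le. lia.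
Qed.

Lemma Z_split0 (j : Z) : IZR j <= -1 \/ 0 <= IZR j.
Proof.
  destruct (Z.le_gt_cases j (-1)).
  left; apply IZR_le in H; auto. right; apply IZR_le; lia.
Qed.

Lemma Z_split1 (j : Z) : IZR j <= 0 \/ 1 <= IZR j.
Proof.
  destruct (Z.le_gt_cases j 0).
  left; apply IZR_le in H; auto. right; apply IZR_le; lia.
Qed.

Section Core.
Variables (th : R) (m k : nat).
Hypothesis th_pos : 0 < th.
Hypothesis Hm : INR m * th = 2 * PI.
Hypothesis Hk : INR m = 4 * INR k + 3 \/ INR m = 4 * INR k + 5.
Hypothesis Hk1 : 1 <= INR k.

Lemma th_small' : th <= 2 * PI / 7.
Proof.
  pose proof (pos_INR k).
  assert (7 <= INR m) by (destruct Hk; lra).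
  apply Rmult_le_reg_r with 7. lra.
  replace (2 * PI / 7 * 7) with (2*PI) by field. nra.
Qed.

Lemma KC0 al b (j : Z) :
  0 <= al -> al <= PI/2 -> Rabs b <= th/2 -> b = al - IZR j * th ->
  Ac th * cos b + Bc th * Rabs (sin b) <= Ac th * cos al + Bc th * Rabs (sin al).
Proof.
  intros H0 H1 H2 H3.
  pose proof PI_RGT_0 as HPI. pose proof (pos_INR k) as Hk0.
  pose proof th_small' as Hs.
  assert (HPIk : PI = (2*INR k + 3/2)*th \/ PI = (2*INR k + 5/2)*th)
    by (destruct Hk as [E|E]; rewrite E in Hm; [left|right]; lra).
  assert (Hpsi : 0 <= Rabs b <= al /\ al + Rabs b <= PI/2 + th/4).
  { destruct (Rle_or_lt 0 b) as [hb|hb].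
    - rewrite Rabs_right by lra. rewrite Rabs_right in H2 by lra.
      destruct (Z_split0 j) as [hj|hj]. { nra. }
      split. split; [lra| nra].
      destruct (Z_split j k) as [hj2|hj2].
      + assert (IZR j * th <= INR k * th) by nra. destruct HPIk as [E|E]; rewrite E in *; nra.
      + assert ((INR k + 1) * th <= IZR j * th) by nra. destruct HPIk as [E|E]; rewrite E in *; nra.
    - rewrite Rabs_left by lra. rewrite Rabs_left in H2 by lra.
      destruct (Z_split1 j) as [hj|hj]. { nra. }
      assert (h4 : (IZR j - 1/2) * th <= INR m * th / 4) by nra.
      assert (h5 : IZR j - 1/2 <= INR m / 4).
      { apply Rmult_le_reg_r with th; auto. lra. }
      assert (h6 : IZR j <= INR k + 1) by (apply Zle_from_R; destruct Hk; lra).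
      assert (IZR j * th <= (INR k + 1) * th) by nra.
      split. split; nra. destruct HPIk as [E|E]; rewrite E in *; nra. }
  destruct Hpsi as [[Hp0 Hp1] Hp2].
  assert (Hb : - (th/2) <= b <= th/2).
  { destruct (Rle_or_lt 0 b); [rewrite Rabs_right in H2 by lra | rewrite Rabs_left in H2 by lra]; lra. }
  assert (Ecb : cos b = cos (Rabs b)).
  { destruct (Rle_or_lt 0 b). rewrite Rabs_right; lra. rewrite Rabs_left, cos_neg; lra. }
  assert (Esb : Rabs (sin b) = sin (Rabs b)).
  { destruct (Rle_or_lt 0 b).
    - rewrite (Rabs_right b) by lra. apply Rabs_right, Rle_ge, sin_ge_0; lra.
    - rewrite (Rabs_left b) by lra. rewrite sin_neg.
      assert (0 <= sin (-b)) by (apply sin_ge_0; lra). rewrite sin_neg in H4.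
      rewrite Rabs_left1; lra. }
  assert (Esa : Rabs (sin al) = sin al).
  { apply Rabs_right, Rle_ge, sin_ge_0; lra. }
  rewrite Ecb, Esb, Esa.
  apply hmono; auto; lra.
Qed.

Lemma KC a b (n : Z) :
  - (PI/2) <= a -> a <= PI/2 -> Rabs b <= th/2 -> b = a + IZR n * th ->
  Ac th * cos b + Bc th * Rabs (sin b) <= Ac th * cos a + Bc th * Rabs (sin a).
Proof.
  intros. destruct (Rle_or_lt 0 a).
  - apply (KC0 a b (- n)); auto. rewrite opp_IZR; lra.
  - pose proof (KC0 (-a) (-b) n ltac:(lra) ltac:(lra)) as K.
    rewrite Rabs_Ropp in K. specialize (K H1 ltac:(lra)).
    rewrite !cos_neg, !sin_neg, !Rabs_Ropp in K. exact K.
Qed.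
End Core.


Lemma Rabs_le_bt x y : Rabs x <= y -> - y <= x <= y.
Proof. unfold Rabs; destruct (Rcase_abs x); lra. Qed.

Lemma IZR_pos_INR p : IZR (Z.pos p) = INR (Pos.to_nat p).
Proof. rewrite INR_IZR_INZ, positive_nat_Z. reflexivity. Qed.

Lemma cos_Zper x q : cos (x + 2 * PI * IZR q) = cos x.
Proof.
  destruct q as [|p|p].
  - rewrite Rmult_0_r, Rplus_0_r; reflexivity.
  - rewrite (IZR_pos_INR p). rewrite <- (cos_period x (Pos.to_nat p)).
    replace (2 * INR (Pos.to_nat p) * PI) with (2 * PI * INR (Pos.to_nat p)) by ring; reflexivity.
  - rewrite <- Pos2Z.opp_pos, opp_IZR, (IZR_pos_INR p).
    rewrite <- (cos_period (x + 2 * PI * - INR (Pos.to_nat p)) (Pos.to_nat p)).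
    replace (x + 2 * PI * - INR (Pos.to_nat p) + 2 * INR (Pos.to_nat p) * PI) with x by ring; reflexivity.
Qed.

Lemma sin_Zper x q : sin (x + 2 * PI * IZR q) = sin x.
Proof.
  destruct q as [|p|p].
  - rewrite Rmult_0_r, Rplus_0_r; reflexivity.
  - rewrite (IZR_pos_INR p). rewrite <- (sin_period x (Pos.to_nat p)).
    replace (2 * INR (Pos.to_nat p) * PI) with (2 * PI * INR (Pos.to_nat p)) by ring; reflexivity.
  - rewrite <- Pos2Z.opp_pos, opp_IZR, (IZR_pos_INR p).
    rewrite <- (sin_period (x + 2 * PI * - INR (Pos.to_nat p)) (Pos.to_nat p)).
    replace (x + 2 * PI * - INR (Pos.to_nat p) + 2 * INR (Pos.to_nat p) * PI) with x by ring; reflexivity.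
Qed.

Lemma red x : exists q : Z, - PI <= x + 2 * PI * IZR q <= PI.
Proof.
  pose proof PI_RGT_0.
  set (z := - x / (2*PI) + 1/2).
  destruct (archimed z) as [h1 h2].
  exists (up z - 1)%Z. rewrite minus_IZR.
  assert (E: x = (1/2 - z) * (2*PI)) by (unfold z; field; lra).
  rewrite E. nra.
Qed.

Lemma cos_abs_bound x ph : - PI <= x <= PI -> 0 <= ph <= PI -> cos ph <= cos x -> Rabs x <= ph.
Proof.
  intros H1 H2 H3.
  destruct (Rle_or_lt (Rabs x) ph) as [h|h]; auto.
  exfalso.
  assert (E : cos x = cos (Rabs x)).
  { destruct (Rle_or_lt 0 x). rewrite Rabs_right; lra. rewrite Rabs_left, cos_neg; lra. }
  assert (Rabs x <= PI) by (apply Rabs_le; lra).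
  assert (cos (Rabs x) < cos ph) by (apply cos_decreasing_1; try lra; apply Rabs_pos).
  lra.
Qed.

Section KA.
Variables (th : R) (m k : nat).
Hypothesis th_pos : 0 < th.
Hypothesis Hm : INR m * th = 2 * PI.
Hypothesis Hk : INR m = 4 * INR k + 3 \/ INR m = 4 * INR k + 5.
Hypothesis Hk1 : 1 <= INR k.

Lemma KA a (i j : nat) :
  0 <= cos a -> cos (th/2) <= cos (a + (INR j - INR i) * th) ->
  Ac th * cos (a + (INR j - INR i) * th) + Bc th * Rabs (sin (a + (INR j - INR i) * th))
  <= Ac th * cos a + Bc th * Rabs (sin a).
Proof.
  intros H1 H2. pose proof PI_RGT_0.
  pose proof (th_small' th m k th_pos Hm Hk Hk1) as Hs.
  destruct (red a) as [q1 Hq1]. destruct (red (a + (INR j - INR i) * th)) as [q2 Hq2].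
  set (a' := a + 2 * PI * IZR q1) in *.
  set (b' := a + (INR j - INR i) * th + 2 * PI * IZR q2) in *.
  assert (Ha : Rabs a' <= PI/2).
  { apply cos_abs_bound; try lra. unfold a'; rewrite cos_Zper, cos_PI2; lra. }
  assert (Hb : Rabs b' <= th/2).
  { apply cos_abs_bound; try lra. unfold b'; rewrite cos_Zper; lra. }
  set (n := (Z.of_nat j - Z.of_nat i + Z.of_nat m * (q2 - q1))%Z).
  assert (En : b' = a' + IZR n * th).
  { unfold b', a', n. rewrite plus_IZR, minus_IZR, mult_IZR, minus_IZR, <- !INR_IZR_INZ.
    replace (2 * PI) with (INR m * th) by exact Hm. ring. }
  pose proof (KC th m k th_pos Hm Hk Hk1 a' b' n) as K.
  apply Rabs_le_bt in Ha. 
  specialize (K ltac:(lra) ltac:(lra) Hb En).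
  unfold a', b' in K. rewrite !cos_Zper, !sin_Zper in K. exact K.
Qed.
End KA.


Definition nrm (e : point) := sqrt (fst e ^ 2 + snd e ^ 2).

Lemma edist_nrm v u : edist v u = nrm (vsub v u).
Proof. reflexivity. Qed.

Lemma nrm_sq e : nrm e * nrm e = fst e ^ 2 + snd e ^ 2.
Proof. unfold nrm. apply sqrt_sqrt. nra. Qed.

Lemma nrm_nonneg e : 0 <= nrm e.
Proof. apply sqrt_pos. Qed.

Lemma nrm_pos e : e <> (0,0) -> 0 < nrm e.
Proof.
  intros H. destruct e as [x y]. unfold nrm; simpl.
  apply sqrt_lt_R0.
  destruct (Req_dec x 0); destruct (Req_dec y 0); subst; try congruence; nra.
Qed.

Lemma polar e : e <> (0,0) -> exists b, fst e = nrm e * cos b /\ snd e = nrm e * sin b.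
Proof.
  intros H. pose proof (nrm_pos e H) as Hr. pose proof (nrm_sq e) as Hs.
  destruct e as [x y]; simpl in *. set (r := nrm (x,y)) in *.
  assert (Hx : -1 <= x / r <= 1).
  { assert (x*x <= r*r) by nra.
    split.
    - apply Rmult_le_reg_r with r; auto. field_simplify; try lra. nra.
    - apply Rmult_le_reg_r with r; auto. field_simplify; try lra. nra. }
  assert (Hsn : sqrt (1 - (x / r)²) = Rabs y / r).
  { rewrite <- (sqrt_Rsqr (Rabs y / r)).
    - f_equal. unfold Rsqr.
      assert (Ay : Rabs y * Rabs y = y * y) by (rewrite <- Rabs_mult; apply Rabs_right; nra).
      replace (Rabs y / r * (Rabs y / r)) with ((Rabs y * Rabs y)/(r*r)) by (field; lra).
      rewrite Ay. replace (y*y) with (r*r - x*x) by nra. field. lra.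
    - unfold Rdiv; apply Rmult_le_pos; [apply Rabs_pos | left; apply Rinv_0_lt_compat; lra]. }
  destruct (Rle_or_lt 0 y).
  - exists (acos (x/r)). rewrite cos_acos, sin_acos, Hsn, Rabs_right by lra.
    split; field; lra.
  - exists (- acos (x/r)). rewrite cos_neg, sin_neg, cos_acos, sin_acos, Hsn, Rabs_left by lra.
    split; field; lra.
Qed.

Lemma dot_polar e b g : fst e = nrm e * cos b -> snd e = nrm e * sin b ->
  dot e (cos g, sin g) = nrm e * cos (b - g) /\
  cross e (cos g, sin g) = - (nrm e * sin (b - g)).
Proof.
  intros H1 H2. unfold dot, cross; simpl. rewrite H1, H2, cos_minus, sin_minus. split; ring.
Qed.

Lemma dot_cross_sq e g :
  dot e (cos g, sin g) ^ 2 + cross e (cos g, sin g) ^ 2 = nrm e * nrm e.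
Proof.
  rewrite nrm_sq. unfold dot, cross; simpl. pose proof (sin2_cos2 g) as H. unfold Rsqr in H.
  transitivity ((fst e ^ 2 + snd e ^ 2) * (sin g * sin g + cos g * cos g)); [ring|].
  rewrite H; ring.
Qed.

Definition G (m i : nat) (e : point) : R :=
  Ac (theta m) * dot e (bisector m i) + Bc (theta m) * Rabs (cross e (bisector m i)).

Section Geo.
Variables (m k : nat).
Hypothesis Hk : (m = 4 * k + 3 \/ m = 4 * k + 5)%nat.
Hypothesis Hk1 : (1 <= k)%nat.

Local Notation th := (theta m).

Lemma m_pos : 0 < INR m.
Proof. apply lt_0_INR. lia. Qed.

Lemma th_pos : 0 < th.
Proof. unfold th, theta. pose proof m_pos; pose proof PI_RGT_0. apply Rdiv_lt_0_compat; lra. Qed.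

Lemma Hm : INR m * th = 2 * PI.
Proof. unfold th, theta. pose proof m_pos. field. lra. Qed.

Lemma HkR : INR m = 4 * INR k + 3 \/ INR m = 4 * INR k + 5.
Proof. destruct Hk; subst; [left|right]; rewrite plus_INR, mult_INR; simpl; lra. Qed.

Lemma Hk1R : 1 <= INR k.
Proof. replace 1 with (INR 1) by reflexivity. apply le_INR; auto. Qed.

Lemma ths : th <= 2 * PI / 7.
Proof. exact (th_small' th m k th_pos Hm HkR Hk1R). Qed.

Lemma KV e (i j : nat) :
  e <> (0,0) -> 0 <= dot e (bisector m i) ->
  nrm e * cos (th/2) <= dot e (bisector m j) ->
  G m j e <= G m i e.
Proof.
  intros H0 H1 H2.
  pose proof (nrm_pos e H0) as Hr.
  destruct (polar e H0) as [b [E1 E2]].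
  unfold G, bisector in *.
  destruct (dot_polar e b (PI / 2 - INR i * th) E1 E2) as [Di Ci].
  destruct (dot_polar e b (PI / 2 - INR j * th) E1 E2) as [Dj Cj].
  rewrite Di, Ci, Dj, Cj in *.
  rewrite !Rabs_Ropp, !Rabs_mult, (Rabs_right (nrm e)) by lra.
  set (a := b - (PI / 2 - INR i * th)) in *.
  replace (b - (PI / 2 - INR j * th)) with (a + (INR j - INR i) * th) in * by (unfold a; ring).
  assert (0 <= cos a) by nra.
  assert (cos (th/2) <= cos (a + (INR j - INR i) * th)).
  { apply Rmult_le_reg_l with (nrm e); auto. }
  pose proof (KA th m k th_pos Hm HkR Hk1R a i j H H3) as K.
  nra.
Qed.

Lemma cover e : e <> (0,0) -> exists i, (i < m)%nat /\ nrm e * cos (th/2) <= dot e (bisector m i).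
Proof.
  intros H0. pose proof (nrm_pos e H0) as Hr. pose proof th_pos as Ht. pose proof ths.
  pose proof PI_RGT_0. pose proof Hm as HM.
  destruct (polar e H0) as [b [E1 E2]].
  set (a0 := b - PI/2).
  set (z := - a0 / th + 1/2).
  destruct (archimed z) as [h1 h2].
  set (q := (up z - 1)%Z).
  assert (Hq : - (th/2) <= a0 + IZR q * th <= th/2).
  { unfold q. rewrite minus_IZR.
    assert (E: a0 = (1/2 - z) * th) by (unfold z; field; lra).
    rewrite E. nra. }
  assert (Hmz : (0 < Z.of_nat m)%Z) by lia.
  set (i := Z.to_nat (q mod Z.of_nat m)).
  pose proof (Z.mod_pos_bound q (Z.of_nat m) Hmz) as Hb.
  exists i. split.
  - unfold i. apply Nat2Z.inj_lt. rewrite Z2Nat.id; lia.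
  - unfold bisector.
    destruct (dot_polar e b (PI / 2 - INR i * th) E1 E2) as [Di _]. rewrite Di.
    apply Rmult_le_compat_l; [lra|].
    assert (Ei : INR i = IZR q - INR m * IZR (q / Z.of_nat m)).
    { unfold i. rewrite INR_IZR_INZ, Z2Nat.id by lia.
      rewrite (Z.mod_eq q (Z.of_nat m)) by lia.
      rewrite minus_IZR, mult_IZR, <- INR_IZR_INZ. ring. }
    replace (b - (PI / 2 - INR i * th)) with ((a0 + IZR q * th) + 2 * PI * IZR (- (q / Z.of_nat m)))
      by (rewrite Ei, opp_IZR, <- HM; unfold a0; ring).
    rewrite cos_Zper.
    destruct (Rle_or_lt 0 (a0 + IZR q * th)).
    + apply cos_le_dec; lra.
    + rewrite (cos_sym (a0 + IZR q * theta m)). apply cos_le_dec; lra.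
Qed.


Lemma cr_bound e i :
  nrm e * cos (th/2) <= dot e (bisector m i) ->
  Rabs (cross e (bisector m i)) <= nrm e * sin (th/2).
Proof.
  intros H. unfold bisector in *.
  pose proof (dot_cross_sq e (PI / 2 - INR i * th)) as S.
  set (D := dot e _) in *. set (C := cross e _) in *.
  pose proof ths as T1. pose proof th_pos as T2. pose proof PI_RGT_0 as T3.
  pose proof (c2_pos th ltac:(lra) ltac:(lra)) as Hc.
  pose proof (s2_pos th ltac:(lra) ltac:(lra)) as Hs.
  pose proof (sin2_cos2 (th/2)) as Hsc. unfold Rsqr in Hsc.
  pose proof (nrm_nonneg e) as Hr.
  set (r := nrm e) in *. set (c := cos (th/2)) in *. set (s0 := sin (th/2)) in *.
  assert (Hrc : 0 <= r * c) by nra.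
  assert (HD2 : (r * c) * (r * c) <= D * D) by nra.
  assert (E1 : C * C = r * r - D * D) by (rewrite <- S; ring).
  assert (E2 : (r * s0) * (r * s0) = r * r - (r * c) * (r * c)).
  { transitivity (r * r * (s0 * s0 + c * c) - (r * c) * (r * c)); [|rewrite Hsc]; ring. }
  assert (C * C <= (r * s0) * (r * s0)) by lra.
  rewrite <- Rabs_right with (r := r * s0) by nra.
  apply Rsqr_le_abs_0. unfold Rsqr. lra.
Qed.

Lemma step_ineq x y t i :
  nrm (vsub y x) * cos (th/2) <= dot (vsub y x) (bisector m i) ->
  nrm (vsub y x) + G m i (vsub t y) <= G m i (vsub t x).
Proof.
  intros H. pose proof (cr_bound _ _ H) as Hc.
  pose proof ths. pose proof th_pos. pose proof PI_RGT_0.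
  pose proof (A_eq th ltac:(lra) ltac:(lra)) as HA.
  pose proof (B_pos th ltac:(lra) ltac:(lra)) as HB.
  pose proof (A_pos th ltac:(lra) ltac:(lra)) as HA0.
  pose proof (s2_pos th ltac:(lra) ltac:(lra)).
  pose proof (nrm_nonneg (vsub y x)).
  unfold G.
  assert (Ed : dot (vsub t y) (bisector m i) = dot (vsub t x) (bisector m i) - dot (vsub y x) (bisector m i))
    by (unfold dot, vsub; simpl; ring).
  assert (Ec : cross (vsub t y) (bisector m i) = cross (vsub t x) (bisector m i) - cross (vsub y x) (bisector m i))
    by (unfold cross, vsub; simpl; ring).
  rewrite Ed, Ec.
  pose proof (Rabs_triang (cross (vsub t x) (bisector m i)) (- cross (vsub y x) (bisector m i))) as T.
  rewrite Rabs_Ropp in T. unfold Rminus.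
  assert (Ac th * (nrm (vsub y x) * cos (th/2)) <= Ac th * dot (vsub y x) (bisector m i)) by nra.
  nra.
Qed.

Lemma direct_le e i :
  nrm e * cos (th/2) <= dot e (bisector m i) -> nrm e <= G m i e.
Proof.
  intros H. pose proof ths. pose proof th_pos. pose proof PI_RGT_0.
  pose proof (A_cos_ge1 th ltac:(lra) ltac:(lra)).
  pose proof (B_pos th ltac:(lra) ltac:(lra)) as HB.
  pose proof (A_pos th ltac:(lra) ltac:(lra)) as HA0.
  pose proof (nrm_nonneg e).
  pose proof (Rabs_pos (cross e (bisector m i))).
  unfold G; nra.
Qed.

Lemma rb_eq : routing_bound m = Ac th * cos (th/2) + Bc th * sin (th/2).
Proof.
  pose proof ths. pose proof th_pos. pose proof PI_RGT_0.
  pose proof (den_pos th ltac:(lra) ltac:(lra)).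
  rewrite (A_eq th ltac:(lra) ltac:(lra)). unfold routing_bound, Bc. field. lra.
Qed.

Lemma final_bound e i :
  nrm e * cos (th/2) <= dot e (bisector m i) -> G m i e <= routing_bound m * nrm e.
Proof.
  intros H. rewrite rb_eq.
  pose proof (cr_bound _ _ H) as Hc.
  pose proof ths. pose proof th_pos. pose proof PI_RGT_0.
  pose proof (B_pos th ltac:(lra) ltac:(lra)) as HB.
  pose proof (A_pos th ltac:(lra) ltac:(lra)) as HA0.
  pose proof (c2_pos th ltac:(lra) ltac:(lra)) as Hc0.
  pose proof (s2_pos th ltac:(lra) ltac:(lra)) as Hs0.
  pose proof (BA_nonneg th ltac:(lra) ltac:(lra) (th/2) ltac:(lra) ltac:(lra)) as HBA.
  pose proof (sin2_cos2 (th/2)) as Hsc. unfold Rsqr in Hsc.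
  pose proof (nrm_nonneg e) as Hr.
  unfold bisector in *; unfold G, bisector;
  pose proof (dot_cross_sq e (PI / 2 - INR i * th)) as S.
  set (D := dot e _) in *. set (C0 := cross e _) in *.
  set (C := Rabs C0).
  assert (HC : C * C = C0 * C0) by (unfold C; rewrite <- Rabs_mult, Rabs_right by nra; auto).
  assert (HC0 : 0 <= C) by apply Rabs_pos.
  set (c0 := cos (th/2)) in *. set (s0 := sin (th/2)) in *.
  set (r := nrm e) in *.
  assert (K1 : D * c0 + C * s0 <= r).
  { assert (I1 : (D * c0 + C * s0) * (D * c0 + C * s0) + (D * s0 - C * c0) * (D * s0 - C * c0)
       = (D * D + C * C) * (s0 * s0 + c0 * c0)) by ring.
    rewrite Hsc, HC in I1.
    assert (I2 : D * D + C0 * C0 = r * r) by (rewrite <- S; ring).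
    pose proof (Rle_0_sqr (D * s0 - C * c0)) as I5; unfold Rsqr in I5.
    assert (I3 : (D * c0 + C * s0) * (D * c0 + C * s0) <= r * r) by lra.
    assert (I4 : 0 <= r) by (unfold r; apply nrm_nonneg).
    destruct (Rle_or_lt (D * c0 + C * s0) r); auto. nra. }
  assert (Q1 : 0 <= (Bc th * c0 - Ac th * s0) * (D - r * c0)) by (apply Rmult_le_pos; lra).
  assert (Q2 : 0 <= Bc th * (r - (D * c0 + C * s0))) by (apply Rmult_le_pos; lra).
  assert (Q3 : Bc th * r * (s0 * s0 + c0 * c0) = Bc th * r) by (rewrite Hsc; ring).
  assert (Q : s0 * (Ac th * D + Bc th * C - (Ac th * c0 + Bc th * s0) * r) <= 0) by lra.
  assert (Q4 : Ac th * D + Bc th * C - (Ac th * c0 + Bc th * s0) * r <= 0).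
  { destruct (Rle_or_lt (Ac th * D + Bc th * C - (Ac th * c0 + Bc th * s0) * r) 0); auto.
    assert (0 < s0 * (Ac th * D + Bc th * C - (Ac th * c0 + Bc th * s0) * r)) by (apply Rmult_lt_0_compat; lra).
    lra. }
  lra.
Qed.


Lemma edist_sym x y : edist x y = edist y x.
Proof. unfold edist. f_equal. ring. Qed.

Lemma vsub_nz v u : v <> u -> vsub v u <> (0,0).
Proof.
  intros H E. apply H. destruct v, u. unfold vsub in E; simpl in E. injection E; intros.
  f_equal; lra.
Qed.

Lemma in_cone_le x i v : in_cone m x i v ->
  nrm (vsub v x) * cos (th/2) <= dot (vsub v x) (bisector m i).
Proof. intros [_ [_ H]]. rewrite <- edist_nrm. lra. Qed.

Lemma cos_half_nonneg : 0 <= cos (th/2).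
Proof. pose proof ths; pose proof th_pos; pose proof PI_RGT_0. left; apply c2_pos; lra. Qed.

Lemma G_indep e i j :
  e <> (0,0) ->
  nrm e * cos (th/2) <= dot e (bisector m i) ->
  nrm e * cos (th/2) <= dot e (bisector m j) -> G m i e = G m j e.
Proof.
  intros H0 H1 H2. pose proof cos_half_nonneg. pose proof (nrm_nonneg e).
  apply Rle_antisym; apply KV; auto; nra.
Qed.

Definition pot (t x : point) : R :=
  match excluded_middle_informative (exists i, in_cone m x i t) with
  | left H => G m (proj1_sig (constructive_indefinite_description _ H)) (vsub t x)
  | right _ => 0
  end.

Lemma pot_eq t x i : in_cone m x i t -> pot t x = G m i (vsub t x).
Proof.
  intros Hi. unfold pot.
  destruct (excluded_middle_informative _) as [H|H].
  - destruct (constructive_indefinite_description _ H) as [j Hj]; simpl.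
    apply G_indep. destruct Hi as [_ [Hne _]]. apply vsub_nz; auto.
    apply in_cone_le; auto. apply in_cone_le; auto.
  - exfalso; apply H; eauto.
Qed.

Lemma cone_exists x t : x <> t -> exists i, in_cone m x i t.
Proof.
  intros H. assert (Hn : vsub t x <> (0,0)) by (apply vsub_nz; auto).
  destruct (cover _ Hn) as [i [Hi Hd]]. exists i. repeat split; auto.
  rewrite edist_nrm. lra.
Qed.

Lemma pot_direct t x : x <> t -> edist x t <= pot t x.
Proof.
  intros H. destruct (cone_exists x t H) as [i Hi].
  rewrite (pot_eq _ _ _ Hi), edist_sym, edist_nrm.
  apply direct_le. apply in_cone_le; auto.
Qed.

Lemma pot_step P t x i y : In t P -> in_cone m x i t -> cone_nbr m P x i y -> y <> t ->
  edist x y + pot t y <= pot t x.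
Proof.
  intros HtP Ht [Hy [Hyc Hmin]] Hyt.
  pose proof (Hmin t HtP Ht) as Hp. unfold proj in Hp.
  destruct (cone_exists y t Hyt) as [j Hj].
  rewrite (pot_eq _ _ _ Ht), (pot_eq _ _ _ Hj).
  rewrite edist_sym, edist_nrm.
  assert (Hle : G m j (vsub t y) <= G m i (vsub t y)).
  { apply KV. apply vsub_nz; auto.
    2: apply in_cone_le; auto.
    replace (dot (vsub t y) (bisector m i)) with
      (dot (vsub t x) (bisector m i) - dot (vsub y x) (bisector m i)) by (unfold dot, vsub; simpl; ring).
    lra. }
  pose proof (step_ineq x y t i (in_cone_le _ _ _ Hyc)). lra.
Qed.


Lemma route_bound P t : In t P -> forall l x, route_from m P t x l -> x <> t ->
  path_length x l <= pot t x.
Proof.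
  intros HtP l. induction l as [|y l' IH]; intros x Hr Hxt.
  - simpl in Hr. congruence.
  - destruct Hr as [_ [Hs Hr]]. simpl.
    destruct (classic (y = t)) as [Eyt|Nyt].
    + subst y. destruct l' as [|z l''].
      * simpl. pose proof (pot_direct t x Hxt). lra.
      * destruct Hr as [Hc _]; congruence.
    + specialize (IH y Hr Nyt).
      destruct Hs as [[_ E]|[_ [i [Hi Hn]]]]; [congruence|].
      pose proof (pot_step P t x i y HtP Hi Hn Nyt). lra.
Qed.

Lemma argmin (L : list point) (Q : point -> Prop) (f : point -> R) :
  (exists v, In v L /\ Q v) ->
  exists v, In v L /\ Q v /\ forall w, In w L -> Q w -> f v <= f w.
Proof.
  induction L as [|a L IH]; intros [v [Hv Hq]].
  - destruct Hv.
  - destruct (classic (exists v, In v L /\ Q v)) as [H|H].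
    + destruct (IH H) as [b [Hb [Hqb Hmin]]].
      destruct (classic (Q a)) as [Qa|NQa].
      * destruct (Rle_or_lt (f a) (f b)).
        -- exists a. split; [left; auto|]. split; auto.
           intros w [E|Hw] Hw'; [subst; lra|]. specialize (Hmin w Hw Hw'). lra.
        -- exists b. split; [right; auto|]. split; auto.
           intros w [E|Hw] Hw'; [subst; lra|]. auto.
      * exists b. split; [right; auto|]. split; auto.
        intros w [E|Hw] Hw'; [subst; contradiction|]. auto.
    + exists a. destruct Hv as [E|Hv].
      * subst. split; [left; auto|]. split; auto.
        intros w [E|Hw] Hw'; [subst; lra|]. exfalso; apply H; eauto.
      * exfalso; apply H; eauto.
Qed.

Definition cnt (t : point) (L : list point) (r : R) : nat :=
  length (filter (fun z => if Rlt_dec (pot t z) r then true else false) L).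

Lemma cnt_mono t L a b : a <= b -> (cnt t L a <= cnt t L b)%nat.
Proof.
  intros H. unfold cnt. induction L as [|z L IH]; simpl; [lia|].
  destruct (Rlt_dec (pot t z) a); destruct (Rlt_dec (pot t z) b); simpl; try lia.
  exfalso; lra.
Qed.

Lemma cnt_lt t L y r : In y L -> pot t y < r -> (cnt t L (pot t y) < cnt t L r)%nat.
Proof.
  intros Hy Hr. unfold cnt. induction L as [|z L IH]; simpl; [destruct Hy|].
  destruct Hy as [E|Hy].
  - subst z. destruct (Rlt_dec (pot t y) (pot t y)); [lra|].
    destruct (Rlt_dec (pot t y) r); [|lra]. simpl.
    pose proof (cnt_mono t L (pot t y) r ltac:(lra)). unfold cnt in H. lia.
  - specialize (IH Hy).
    destruct (Rlt_dec (pot t z) (pot t y)); destruct (Rlt_dec (pot t z) r); simpl; try lia.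
    exfalso; lra.
Qed.

Lemma next_step P t x : In t P -> In x P -> x <> t ->
  exists y, In y P /\ route_step m P t x y /\ (y = t \/ edist x y + pot t y <= pot t x).
Proof.
  intros HtP HxP Hxt.
  destruct (classic (theta_adj m P x t)) as [Ha|Na].
  - exists t. split; auto. split; [left; auto|]. left; auto.
  - destruct (cone_exists x t Hxt) as [i Hi].
    destruct (argmin P (in_cone m x i) (proj m x i) (ex_intro _ t (conj HtP Hi))) as [y [Hy [Hyc Hmin]]].
    assert (Hn : cone_nbr m P x i y) by (split; auto).
    exists y. split; auto. split; [right; split; eauto|].
    destruct (classic (y = t)); [left; auto|right].
    apply (pot_step P t x i y); auto.
Qed.

Lemma route_exists P t : In t P -> forall n x, (cnt t P (pot t x) < n)%nat -> In x P ->
  exists l, route_from m P t x l.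
Proof.
  intros HtP n. induction n as [|n IH]; intros x Hc HxP; [lia|].
  destruct (classic (x = t)) as [E|Nxt].
  - exists []. simpl; auto.
  - destruct (next_step P t x HtP HxP Nxt) as [y [HyP [Hs Hy]]].
    destruct (classic (y = t)) as [Eyt|Nyt].
    + exists [y]. simpl. auto.
    + destruct Hy as [|Hy]; [contradiction|].
      assert (Hxy : 0 < edist x y).
      { rewrite edist_nrm. apply nrm_pos. apply vsub_nz.
        destruct Hs as [[_ E]|[_ [i [_ [_ [[_ [Hne _]] _]]]]]]; [congruence|].
        intro E; apply Hne; auto. }
      assert (Hlt : pot t y < pot t x) by lra.
      pose proof (cnt_lt t P y (pot t x) HyP Hlt).
      destruct (IH y ltac:(lia) HyP) as [l Hl].
      exists (y :: l). simpl. auto.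
Qed.

End Geo.


Theorem mainTheorem14 (k m : nat) (P : list point) (u w : point) :
  (1 <= k)%nat ->
  (m = 4 * k + 3 \/ m = 4 * k + 5)%nat ->
  NoDup P ->
  general_position m P ->
  In u P -> In w P ->
  (exists l, route_from m P w u l) /\
  (forall l, route_from m P w u l ->
     path_length u l <= routing_bound m * edist u w).
Proof.
  intros Hk1 Hk _ _ HuP HwP. split.
  - exact (route_exists m k Hk Hk1 P w HwP (S (cnt m w P (pot m w u))) u (Nat.lt_succ_diag_r _) HuP).
  - intros l Hl.
    destruct (classic (u = w)) as [E|Nuw].
    + subst u. destruct l as [|y l'].
      * simpl. unfold edist. replace ((fst w - fst w) ^ 2 + (snd w - snd w) ^ 2) with 0 by ring.
        rewrite sqrt_0. lra.
      * destruct Hl as [Hc _]; congruence.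
    + pose proof (route_bound m k Hk Hk1 P w HwP l u Hl Nuw) as H1.
      destruct (cone_exists m k Hk Hk1 u w Nuw) as [i Hi].
      rewrite (pot_eq m k Hk Hk1 w u i Hi) in H1.
      pose proof (final_bound m k Hk Hk1 (vsub w u) i (in_cone_le m u i w Hi)) as H2.
      rewrite edist_sym, edist_nrm.
      lra.
Qed.
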